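(* Let $S=(G,P,\Lambda,I)$ be a completely simple semigroup with non-singular sandwich matrix $P$, and let $\mathbf 1=(1,1_G,1)$. Then every algebraic set $Y\subseteq S^n$ over $S$ (in the language $\mathcal{L}_S$) is the solution set of a system of the form $\{t_i(X)=\mathbf{1}\mid i\in\mathcal{I}\}$, where $X=(x_1,\dots,x_n)$ and each $t_i$ is an $\mathcal{L}_S$-term.
   Context: Rees representation: a completely simple semigroup $S=(G,P,\Lambda,I)$ is given by a group $G$, index sets $\Lambda,I$ (each containing an element $1$), and a matrix $P=(p_{i\lambda})_{i\in I,\lambda\in\Lambda}$ over $G$ normalised so that $p_{1\lambda}=p_{i1}=1_G$; elements are triples $(\lambda,g,i)$ with product $(\lambda,g,i)(\mu,h,j)=(\lambda,gp_{i\mu}h,j)$ and inversion $(\lambda,g,i)^{-1}=(\lambda,p_{i\lambda}^{-1}g^{-1}p_{i\lambda}^{-1},i)$. $P$ is non-singular if it has no two equal rows and no two equal columns. The language $\mathcal{L}_S$ is $\{\cdot,{}^{-1}\}$ plus a constant for each element of $S$; terms are built from variables and constants using products and ${}^{-1}$; an algebraic set is the solution set of a system (set) of equations $t(X)=s(X)$ between terms. *)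

(* Defs.v *)
From mathcomp Require Import all_boot.
Set Implicit Arguments. Unset Strict Implicit. Unset Printing Implicit Defensive.

Record group := Group {
  gcar :> Type;
  gmul : gcar -> gcar -> gcar;
  ginv : gcar -> gcar;
  gone : gcar;
  gmulA : forall x y z, gmul x (gmul y z) = gmul (gmul x y) z;
  gmul1 : forall x, gmul gone x = x;
  gmulV : forall x, gmul (ginv x) x = gone }.

Record rees_data := Rees {
  rG : group;
  rLam : Type;
  rI : Type;
  lam1 : rLam;
  i1 : rI;
  rP : rI -> rLam -> rG;
  rP_row1 : forall l, rP i1 l = gone rG;
  rP_col1 : forall i, rP i lam1 = gone rG }.

Definition nonsingular (R : rees_data) : Prop :=
  (forall i j : rI R, (forall l, rP i l = rP j l) -> i = j) /\
  (forall l m : rLam R, (forall i, rP i l = rP i m) -> l = m).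

Definition elt (R : rees_data) : Type := (rLam R * rG R * rI R)%type.

Definition smul (R : rees_data) (a b : elt R) : elt R :=
  let: (l, g, i) := a in let: (m, h, j) := b in
  (l, gmul g (gmul (rP i m) h), j).

Definition sinv (R : rees_data) (a : elt R) : elt R :=
  let: (l, g, i) := a in
  (l, gmul (ginv (rP i l)) (gmul (ginv g) (ginv (rP i l))), i).

Definition sone (R : rees_data) : elt R := (lam1 R, gone (rG R), i1 R).

Inductive term (R : rees_data) (n : nat) : Type :=
  | TVar of 'I_n
  | TConst of elt R
  | TMul of term R n & term R n
  | TInv of term R n.

Fixpoint eval (R : rees_data) (n : nat) (t : term R n) (X : 'I_n -> elt R) : elt R :=
  match t with
  | TVar k => X k
  | TConst c => c
  | TMul u v => smul (eval u X) (eval v X)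
  | TInv u => sinv (eval u X)
  end.

Definition solutions (R : rees_data) (n : nat) (E : term R n * term R n -> Prop)
  : ('I_n -> elt R) -> Prop :=
  fun X => forall e, E e -> eval e.1 X = eval e.2 X.

Definition algebraic_set (R : rees_data) (n : nat) (Y : ('I_n -> elt R) -> Prop) : Prop :=
  exists E, forall X, Y X <-> solutions E X.

(* Main.v *)
Require Import Defs.
From mathcomp Require Import all_boot.
Set Implicit Arguments. Unset Strict Implicit.

Section G.
Variable G : group.

Lemma mulgV' (x : G) : gmul x (ginv x) = gone G.
Proof.
rewrite -[gmul x (ginv x)](@gmul1 G).
rewrite -{1}(@gmulV G (ginv x)) -gmulA (@gmulA G (ginv x)) gmulV gmul1.
exact: gmulV.
Qed.

Lemma mulg1' (x : G) : gmul x (gone G) = x.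
Proof. by rewrite -(@gmulV G x) gmulA mulgV' gmul1. Qed.

Lemma inv1' : ginv (gone G) = gone G.
Proof. by rewrite -[ginv _]mulg1' gmulV. Qed.

Lemma mulg_lcancel (a b c : G) : gmul a b = gmul a c -> b = c.
Proof. by move=> h; rewrite -(@gmul1 G b) -(@gmul1 G c) -(@gmulV G a) -!gmulA h. Qed.

Lemma mulg_rcancel (a b c : G) : gmul b a = gmul c a -> b = c.
Proof. by move=> h; rewrite -(mulg1' b) -(mulg1' c) -(mulgV' a) !gmulA h. Qed.

Lemma divg_eq1 (a b : G) : gmul a (ginv b) = gone G -> a = b.
Proof. by move=> h; rewrite -(mulg1' a) -(@gmulV G b) gmulA h gmul1. Qed.
End G.

Section T.
Variables (R : rees_data) (n : nat).

Definition tA (u : term R n) : term R n :=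
  TMul (TMul (TConst n (sone R)) u) (TConst n (sone R)).
Definition tD (u v : term R n) : term R n := TMul (tA u) (TInv (tA v)).
Definition ck (k : rI R) : term R n -> term R n :=
  fun u => TMul (TConst n (lam1 R, gone (rG R), k)) u.
Definition dm (m : rLam R) : term R n -> term R n :=
  fun u => TMul u (TConst n (m, gone (rG R), i1 R)).

Lemma evA u X : eval (tA u) X = (lam1 R, (eval u X).1.2, i1 R).
Proof.
rewrite /tA /=. case: (eval u X) => [[l g] i] /=.
by rewrite rP_row1 gmul1 gmul1 rP_col1 gmul1 mulg1'.
Qed.

Lemma evD u v X :
  eval (tD u v) X = (lam1 R, gmul (eval u X).1.2 (ginv (eval v X).1.2), i1 R).
Proof.
rewrite /tD; have -> : eval (TMul (tA u) (TInv (tA v))) X = smul (eval (tA u) X) (sinv (eval (tA v) X)) by [].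
rewrite !evA /= rP_row1 inv1' !gmul1 mulg1'.
by [].
Qed.

Lemma evD1 u v X : eval (tD u v) X = sone R <-> (eval u X).1.2 = (eval v X).1.2.
Proof.
rewrite evD /sone; split.
  by case=> h; apply: divg_eq1.
by move=> ->; rewrite mulgV'.
Qed.

Lemma evck k u X : (eval (ck k u) X).1.2 = gmul (rP k (eval u X).1.1) (eval u X).1.2.
Proof. by rewrite /ck /=; case: (eval u X) => [[l g] i] /=; rewrite gmul1. Qed.

Lemma evdm m u X : (eval (dm m u) X).1.2 = gmul (eval u X).1.2 (rP (eval u X).2 m).
Proof. by rewrite /dm /=; case: (eval u X) => [[l g] i] /=; rewrite mulg1'. Qed.
End T.

Theorem mainTheorem10 (R : rees_data) (hP : nonsingular R) (n : nat)
  (Y : ('I_n -> elt R) -> Prop) :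
  algebraic_set Y ->
  exists T : term R n -> Prop,
    forall X, Y X <-> (forall t, T t -> eval t X = sone R).
Proof.
case=> E HE.
exists (fun t' => exists2 e, E e &
  [\/ t' = tD e.1 e.2,
      exists k, t' = tD (ck k e.1) (ck k e.2) |
      exists m, t' = tD (dm m e.1) (dm m e.2)]).
move=> X; apply: iff_trans (HE X) _; rewrite /solutions; split.
  move=> H t' [e /H He [->|[k ->]|[m ->]]]; apply/evD1.
  - by rewrite He.
  - by rewrite !evck He.
  - by rewrite !evdm He.
move=> H e Ee.
have H0 : (eval e.1 X).1.2 = (eval e.2 X).1.2.
  by apply/evD1; apply: H; exists e => //; apply: Or31.
have Hl : (eval e.1 X).1.1 = (eval e.2 X).1.1.
  apply: hP.2 => k.
  have := H (tD (ck k e.1) (ck k e.2)).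
  move=> /(_ (ex_intro2 _ _ e Ee (Or32 _ _ (ex_intro _ k erefl)))) /evD1.
  rewrite !evck H0; exact: mulg_rcancel.
have Hi : (eval e.1 X).2 = (eval e.2 X).2.
  apply: hP.1 => m.
  have := H (tD (dm m e.1) (dm m e.2)).
  move=> /(_ (ex_intro2 _ _ e Ee (Or33 _ _ (ex_intro _ m erefl)))) /evD1.
  rewrite !evdm H0; exact: mulg_lcancel.
move: H0 Hl Hi; case: (eval e.1 X) => [[l g] i]; case: (eval e.2 X) => [[l' g'] i'] /=.
by move=> -> -> ->.
Qed.
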